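(* Let $G$ be a finite $2$-group with $G\not\cong C_2$, and $\omega\in H^3(G,\mathbb{C}^\times)$, and suppose $\mathcal{Z}:=\mathcal{Z}(\mathrm{Vec}_G^\omega)$ has set of twists exactly $\{1,i,-i\}$. Then for every invertible object $X$ of $\mathcal{Z}$, $X\otimes X\cong\mathbbm{1}$ if and only if $\theta_X=1$.
   Context: $\mathcal{Z}(\mathrm{Vec}_G^\omega)$ is the Drinfeld center (twisted double) of the category of $G$-graded vector spaces with associator twisted by the 3-cocycle $\omega$; it is a modular fusion category and $\theta_X$ denotes the twist of a simple object $X$. An object is invertible if $X\otimes X^*\cong\mathbbm{1}$. *)

(* Defs.v *)
From HB Require Import structures.
From mathcomp Require Import all_boot all_order all_algebra all_fingroup all_solvable all_field.
Set Implicit Arguments. Unset Strict Implicit. Unset Printing Implicit Defensive.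
Import Order.TTheory GRing.Theory Num.Theory.
Local Open Scope ring_scope.

(* Explicit model of the Drinfeld center Z(Vec_G^omega) as the category of
   modules over the twisted quantum double D^omega(G) (Dijkgraaf-Pasquier-Roche). *)

Section Model.
Variable gT : finGroupType.

Definition normalized_3cocycle (G : {group gT}) (w : gT -> gT -> gT -> algC) : Prop :=
  [/\ (forall a b c, a \in G -> b \in G -> c \in G -> w a b c != 0%R),
      (forall a b c d, a \in G -> b \in G -> c \in G -> d \in G ->
         (w b c d * w a (b * c)%g d * w a b c = w (a * b)%g c d * w a b (c * d)%g)%R) &
      (forall a b, a \in G -> b \in G ->
         [/\ w 1%g a b = 1%R, w a 1%g b = 1%R & w a b 1%g = 1%R])].

(* DPR 2-cocycle theta_a(x,y) governing the algebra D^omega(G):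
   (delta_a x)(delta_{a} y) = theta_a(x,y) delta_a (xy)  for x,y in C_G(a). *)
Definition dpr_theta (w : gT -> gT -> gT -> algC) (a x y : gT) : algC :=
  (w a x y * w x y (a ^ (x * y))%g / w x (a ^ x)%g y)%R.

(* DPR coproduct factor gamma_x(h,k):
   Delta(delta_g x) = sum_{hk=g} gamma_x(h,k) delta_h x (x) delta_k x. *)
Definition dpr_gamma (w : gT -> gT -> gT -> algC) (x h k : gT) : algC :=
  (w h k x * w x (h ^ x)%g (k ^ x)%g / w h x (k ^ x)%g)%R.

Definition proj_rep (H : {set gT}) (beta : gT -> gT -> algC) (n : nat)
    (rho : gT -> 'M[algC]_n) : Prop :=
  (forall x, x \in H -> rho x \in unitmx) /\
  (forall x y, x \in H -> y \in H -> (rho x *m rho y = beta x y *: rho (x * y)%g)%R).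

Definition mx_irred (H : {set gT}) (n : nat) (rho : gT -> 'M[algC]_n) : Prop :=
  forall U : 'M[algC]_n, (forall x, x \in H -> stablemx U (rho x)) ->
    (U == 0 :> 'M[algC]_n)%R || row_full U.

(* t is the twist of some simple object (a, rho) of Z(Vec_G^omega): a in G,
   rho an irreducible theta_a-projective representation of C_G(a); the twist
   acts on it as the scalar rho(a). *)
Definition center_twist (G : {group gT}) (w : gT -> gT -> gT -> algC) (t : algC) : Prop :=
  exists (a : gT) (n : nat) (rho : gT -> 'M[algC]_n.+1),
    [/\ a \in G, proj_rep ('C_G[a])%g (dpr_theta w a) rho, mx_irred ('C_G[a])%g rho
      & rho a = (t%:M)%R].

(* Invertible (i.e. one-dimensional) simple objects: a central, chi a
   theta_a-projective character of G. *)
Definition inv_obj (G : {group gT}) (w : gT -> gT -> gT -> algC)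
    (X : gT * (gT -> algC)) : Prop :=
  [/\ X.1 \in ('Z(G))%g,
      (forall x, x \in G -> X.2 x != 0%R) &
      (forall x y, x \in G -> y \in G ->
         (X.2 x * X.2 y = dpr_theta w X.1 x y * X.2 (x * y)%g)%R)].

(* tensor product of invertible objects (via the DPR coproduct) *)
Definition inv_tensor (w : gT -> gT -> gT -> algC) (X Y : gT * (gT -> algC))
  : gT * (gT -> algC) :=
  ((X.1 * Y.1)%g, fun x => (dpr_gamma w x X.1 Y.1 * X.2 x * Y.2 x)%R).

Definition inv_unit : gT * (gT -> algC) := (1%g, fun _ => 1%R).

Definition inv_iso (G : {group gT}) (X Y : gT * (gT -> algC)) : Prop :=
  X.1 = Y.1 /\ (forall x, x \in G -> X.2 x = Y.2 x).

Definition inv_twist (X : gT * (gT -> algC)) : algC := X.2 X.1.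

End Model.

(* Main.v *)
Require Import Defs.
From mathcomp Require Import all_boot all_order all_algebra all_fingroup all_solvable all_field.
From mathcomp Require Import ring.
From Stdlib Require Import Classical.
Import GRing.Theory Num.Theory.
Local Open Scope ring_scope.

Section Cocycle.
Variable gT : finGroupType.
Variable G : {group gT}.
Variable w : gT -> gT -> gT -> algC.
Hypothesis Hw : normalized_3cocycle G w.

Lemma wn0 a b c : a \in G -> b \in G -> c \in G -> w a b c != 0.
Proof. by case: Hw => H _ _; apply: H. Qed.
Lemma wco a b c d : a \in G -> b \in G -> c \in G -> d \in G ->
   w b c d * w a (b * c)%g d * w a b c = w (a * b)%g c d * w a b (c * d)%g.
Proof. by case: Hw => _ H _; apply: H. Qed.
Lemma w1l a b : a \in G -> b \in G -> w 1%g a b = 1.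
Proof. by case: Hw => _ _ H Ha Hb; case: (H a b Ha Hb). Qed.
Lemma w1m a b : a \in G -> b \in G -> w a 1%g b = 1.
Proof. by case: Hw => _ _ H Ha Hb; case: (H a b Ha Hb). Qed.
Lemma w1r a b : a \in G -> b \in G -> w a b 1%g = 1.
Proof. by case: Hw => _ _ H Ha Hb; case: (H a b Ha Hb). Qed.

Lemma conj_id (x y : gT) : commute x y -> (x ^ y)%g = x.
Proof. by move=> cxy; rewrite conjgE cxy mulKg. Qed.

Lemma theta_cocycle b g x y : b \in G -> g \in G -> x \in G -> y \in G ->
  commute b g -> commute b x -> commute b y ->
  dpr_theta w b g x * dpr_theta w b (g * x)%g y =
  dpr_theta w b g (x * y)%g * dpr_theta w b x y.
Proof.
move=> bG gG xG yG cg cx cy.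
have cgx : commute b (g * x)%g by apply: commuteM.
have cxy : commute b (x * y)%g by apply: commuteM.
have cgxy : commute b (g * x * y)%g by apply: commuteM.
rewrite /dpr_theta !conj_id //; last by rewrite mulgA.
have H1 := wco b g x y bG gG xG yG.
have H2 := wco g b x y gG bG xG yG.
have H3 := wco g x b y gG xG bG yG.
have H4 := wco g x y b gG xG yG bG.
rewrite cg in H1; rewrite -cx in H3; rewrite -cy in H4.
have nz := wn0; have gM := groupM.
set L := (_ * _)%R.
set R := (_ * _)%R.
have E : L = R * (((w g x y * w b (g * x)%g y * w b g x) / (w (g * b)%g x y * w b g (x * y)%g))
   * ((w (g * b)%g x y * w g b (x * y)%g) / (w b x y * w g (b * x)%g y * w g b x))
   * ((w x b y * w g (b * x)%g y * w g x b) / (w (g * x)%g b y * w g x (b * y)%g))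
   * ((w (g * x)%g y b * w g x (b * y)%g) / (w x y b * w g (x * y)%g b * w g x y))).
  rewrite /L /R; field.
  by rewrite !nz ?gM.
rewrite E H1 H2 H3 H4 !divff ?mulr1 //; by rewrite ?mulf_neq0 ?nz ?gM.
Qed.
Lemma E_identity {a x} : a \in G -> x \in G -> commute a x -> (a * a = 1)%g -> (x * x = 1)%g ->
  dpr_gamma w x a a * dpr_theta w a x x * w a a a * w x x x = w (a * x)%g (a * x)%g (a * x)%g.
Proof.
move=> aG xG cax aa xx.
have axG : (a * x)%g \in G by rewrite groupM.
have xa : (x * a = a * x)%g by [].
have xax : (x * (a * x) = a)%g by rewrite mulgA -cax -mulgA xx mulg1.
have axax : ((a * x) * (a * x) = 1)%g by rewrite -mulgA xax aa.
have ax1 : (a ^ x)%g = a by apply: conj_id.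
rewrite /dpr_gamma /dpr_theta ax1 xx conjg1.
have H1 := wco a a a x aG aG aG xG.
have H2 := wco a x x x aG xG xG xG.
have H3 := wco a x x (a * x)%g aG xG xG axG.
have H4 := wco a x (a * x)%g (a * x)%g aG xG axG axG.
have H5 := wco x a x x xG aG xG xG.
have H6 := wco x a x (a * x)%g xG aG xG axG.
have H7 := wco x x a x xG xG aG xG.
rewrite ?aa ?xx ?xa ?xax ?axax ?w1l ?w1m ?w1r ?mulr1 ?mul1r ?group1 // in H1 H2 H3 H4 H5 H6 H7.
set L := (_ * w x x x)%R.
have E : L = w (a * x)%g (a * x)%g (a * x)%g *
  ((w a a x * w a a a / w a a (a * x)%g)
  * (w x x x * w a x x / w (a * x)%g x x)
  * (w x x (a * x)%g * w a x x / (w (a * x)%g x (a * x)%g * w a x a))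
  * (w x (a * x)%g (a * x)%g * w a a (a * x)%g * w a x (a * x)%g / w (a * x)%g (a * x)%g (a * x)%g)
  * (w (a * x)%g x x / (w a x x * w x (a * x)%g x * w x a x))
  * (w (a * x)%g x (a * x)%g * w x a a / (w a x (a * x)%g * w x (a * x)%g (a * x)%g * w x a x))
  * (w x a x * w x (a * x)%g x * w x x a / w x x (a * x)%g)).
  rewrite /L; field.
  by rewrite !wn0 ?groupM.
rewrite E H1 H2 H3 H4 H5 H6 H7 !divff ?mulr1 //; by rewrite ?mulf_neq0 ?wn0 ?groupM.
Qed.
Lemma theta_nz {a x y} : a \in G -> x \in G -> y \in G -> dpr_theta w a x y != 0.
Proof.
move=> aG xG yG; rewrite /dpr_theta; apply: mulf_neq0; [apply: mulf_neq0|rewrite invr_eq0]; apply: wn0; by rewrite ?groupJ ?groupM.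
Qed.

Section Eigen.
Variable b : gT.
Hypothesis bG : b \in G.
Variable n : nat.
Variable rho : gT -> 'M[algC]_n.
Variable lam : algC.
Let C := ('C_G[b])%g.
Hypothesis Hrho : proj_rep C (dpr_theta w b) rho.
Hypothesis rho1 : rho 1%g = 1%:M.

Definition good {m} (U : 'M[algC]_(m, n)) :=
  [/\ forall x, x \in C -> stablemx U (rho x), U *m rho b = lam *: U & U != 0].

Lemma sub_eigen m1 m2 (V : 'M[algC]_(m1, n)) (U : 'M[algC]_(m2, n)) :
  (V <= U)%MS -> U *m rho b = lam *: U -> V *m rho b = lam *: V.
Proof. by case/submxP=> D -> HU; rewrite -mulmxA HU scalemxAr. Qed.

Lemma minimal_exists (r : nat) : forall {m} (U : 'M[algC]_(m, n)), good U -> (\rank U <= r)%N ->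
  exists m' (M : 'M[algC]_(m', n)), good M /\
    forall m2 (V : 'M[algC]_(m2, n)), good V -> (V <= M)%MS -> (\rank M <= \rank V)%N.
Proof.
elim: r => [|r IH] m U gU rU.
  case: gU => _ _; rewrite -mxrank_eq0; by move: rU; rewrite leqn0 => ->.
case: (classic (exists m2 (V : 'M[algC]_(m2, n)), [/\ good V, (V <= U)%MS & (\rank V < \rank U)%N])).
  case=> m2 [V [gV _ lt]]; apply: (IH _ V gV); by rewrite -ltnS (leq_trans lt).
move=> nex; exists m, U; split=> // m2 V gV sVU; rewrite leqNgt; apply/negP=> lt.
by apply: nex; exists m2, V.
Qed.

Lemma final k (B : 'M[algC]_(k, n)) : row_free B -> good B ->
  (forall m2 (V : 'M[algC]_(m2, n)), good V -> (V <= B)%MS -> (k <= \rank V)%N) ->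
  center_twist G w lam.
Proof.
case: k B => [|k] B fB [stB eB nzB] minB.
  by move: nzB; rewrite flatmx0 eqxx.
case: Hrho => unit_rho mul_rho.
pose sig x := B *m rho x *m pinvmx B.
have sigB x : x \in C -> sig x *m B = B *m rho x.
  by move=> xC; rewrite /sig mulmxKpV //; apply: stB.
have BpB : B *m pinvmx B = 1%:M.
  by apply: (row_free_inj fB); rewrite mulmxKpV // mul1mx.
have sig1 : sig 1%g = 1%:M by rewrite /sig rho1 mulmx1 BpB.
have sigM x y : x \in C -> y \in C -> sig x *m sig y = dpr_theta w b x y *: sig (x * y)%g.
  move=> xC yC; apply: (row_free_inj fB) => /=.
  rewrite -mulmxA sigB // mulmxA sigB // -mulmxA mul_rho // -scalemxAl sigB ?groupM //.
  by rewrite -scalemxAr.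
have CsubG : forall x, x \in C -> x \in G by move=> x /subcent1P [].
exists b, k, sig; split=> //.
- split=> // x xC.
  have xVC : (x^-1)%g \in C by rewrite groupV.
  have nz := theta_nz bG (CsubG x xC) (CsubG _ xVC).
  have := sigM x _ xC xVC; rewrite mulgV sig1 => H.
  have : sig x *m ((dpr_theta w b x x^-1)^-1 *: sig x^-1%g) = 1%:M.
    by rewrite -scalemxAr H scalerA mulVf // scale1r.
  by case/mulmx1_unit.
- move=> W stW; case: eqP => //= /eqP nzW.
  have gV : good (W *m B).
    split.
    + move=> x xC; rewrite -mulmxA -sigB // mulmxA; apply: submxMr; exact: stW.
    + by apply: sub_eigen (submxMl W B) eB.
    + by rewrite -mxrank_eq0 mxrankMfree // mxrank_eq0.
  have := minB _ _ gV (submxMl W B); rewrite mxrankMfree // => le.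
  by rewrite /row_full eqn_leq rank_leq_col le.
- by rewrite /sig eB -scalemxAl BpB scalemx1.
Qed.

Lemma twist_of_eigen (v : 'rV[algC]_n) :
  (forall x, x \in C -> rho x *m rho b = rho b *m rho x) ->
  v != 0 -> v *m rho b = lam *: v -> center_twist G w lam.
Proof.
move=> comm nzv ev.
pose E := kermx (rho b - lam%:M).
have EE : E *m rho b = lam *: E.
  by have := mulmx_ker (rho b - lam%:M); rewrite mulmxBr mul_mx_scalar => /eqP; rewrite subr_eq0 => /eqP.
have vE : (v <= E)%MS by apply/sub_kermxP; rewrite mulmxBr ev mul_mx_scalar subrr.
have gE : good E.
  split=> //.
  + move=> x xC; apply/sub_kermxP.
    by rewrite mulmxBr -mulmxA comm // mulmxA EE mul_mx_scalar -scalemxAl subrr.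
  + by apply: contraNneq nzv => E0; rewrite -submx0 -E0.
have [m' [M [gM minM]]] := @minimal_exists (\rank E) _ E gE (leqnn _).
have gB : good (row_base M).
  case: gM => stM eM nzM; split.
  + move=> x xC.
    have sBM : (row_base M <= M)%MS by rewrite eq_row_base.
    apply: (submx_trans (submxMr (rho x) sBM)).
    by rewrite eq_row_base; apply: stM.
  + by apply: sub_eigen eM; rewrite eq_row_base.
  + by rewrite -mxrank_eq0 eq_row_base mxrank_eq0.
apply: (@final _ (row_base M) (row_base_free M) gB) => m2 V gV sVB.
by apply: (minM _ _ gV); move: sVB; rewrite eq_row_base.
Qed.
End Eigen.
Lemma theta_1r a g : a \in G -> g \in G -> dpr_theta w a g 1%g = 1.
Proof.
move=> aG gG; rewrite /dpr_theta mulg1 w1r // w1m ?groupJ // w1r ?groupJ //.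
by rewrite mulr1 divr1.
Qed.

Section Regular.
Variable b : gT.
Hypothesis bG : b \in G.
Let C := ('C_G[b])%g.
Let th := dpr_theta w b.
Let C1 : (1%g \in C) := group1 _.
Let gv (i : 'I_#|C|) : gT := enum_val i.
Let rk (y : gT) : 'I_#|C| := enum_rank_in C1 y.
Lemma gvC i : gv i \in C. Proof. exact: enum_valP. Qed.
Lemma gvrk y : y \in C -> gv (rk y) = y. Proof. by move=> yC; rewrite /gv /rk enum_rankK_in. Qed.
Lemma rkgv i : rk (gv i) = i. Proof. by rewrite /gv /rk enum_valK_in. Qed.
Lemma CG {x} : x \in C -> x \in G. Proof. by case/subcent1P. Qed.
Lemma Cc {x} : x \in C -> commute b x. Proof. by case/subcent1P. Qed.
Lemma bC : b \in C. Proof. exact: subcent1_id. Qed.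

Definition rr (x : gT) : 'M[algC]_#|C| :=
  \matrix_(i, j) (if (gv i * x)%g == gv j then th (gv i) x else 0).

Lemma rrM {x y} : x \in C -> y \in C -> rr x *m rr y = th x y *: rr (x * y)%g.
Proof.
move=> xC yC; apply/matrixP => i j; rewrite !mxE.
have gxC : (gv i * x)%g \in C by rewrite groupM ?gvC.
rewrite (bigD1 (rk (gv i * x)%g)) //= big1 ?addr0; last first.
  move=> k nk; rewrite !mxE; case: eqP => [e|]; last by rewrite mul0r.
  by move: nk; rewrite e rkgv eqxx.
rewrite !mxE gvrk // eqxx mulgA.
case: eqP => _; last by rewrite !mulr0.
rewrite /th theta_cocycle ?CG ?gvC ?bC //; first exact: mulrC.
all: by apply: Cc; rewrite ?gvC.
Qed.

Lemma rr1 : rr 1%g = 1%:M.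
Proof.
apply/matrixP => i j; rewrite !mxE mulg1 (inj_eq enum_val_inj).
by case: eqP => // _; rewrite /th theta_1r ?CG ?gvC ?bC.
Qed.

Lemma rr_unit x : x \in C -> rr x \in unitmx.
Proof.
move=> xC; have xVC : (x^-1)%g \in C by rewrite groupV.
have nz : th x x^-1 != 0 by apply: theta_nz; rewrite ?CG ?bC.
have := rrM xC xVC; rewrite mulgV rr1 => H.
have : rr x *m ((th x x^-1)^-1 *: rr x^-1%g) = 1%:M.
  by rewrite -scalemxAr H scalerA mulVf // scale1r.
by case/mulmx1_unit.
Qed.

Lemma rr_comm x : x \in C -> rr x *m rr b = rr b *m rr x.
Proof.
move=> xC; rewrite !rrM ?bC // (Cc xC); congr (_ *: _).
have cx := Cc xC.
rewrite /th /dpr_theta !conj_id //; last by apply: commuteM.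
  field; by rewrite !wn0 ?CG ?bC.
by apply: commuteM.
Qed.

Lemma rr_proj : proj_rep C th rr.
Proof. by split=> [x|x y]; [exact: rr_unit | exact: rrM]. Qed.

Section Root.
Variable lam : algC.
Let m := #[b]%g.
Let c := \prod_(j < m) th (b ^+ j)%g b.
Hypothesis Hlam : lam ^+ m = c.

Lemma c_nz : c != 0.
Proof.
apply/prodf_neq0 => j _; apply: theta_nz; rewrite ?groupX //.
Qed.

Lemma lam_nz : lam != 0.
Proof.
apply: contraNneq c_nz => l0; rewrite -Hlam l0 expr0n.
have m0 : (0 < m)%N := order_gt0 b.
by rewrite eqn0Ngt m0.
Qed.

Let mu (k : nat) := (\prod_(j < k) th (b ^+ j)%g b) / lam ^+ k.
Let f (h : gT) := \sum_(k < m) ((h == b ^+ k)%g%:R * mu k).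

Lemma fpow k : (k < m)%N -> f (b ^+ k)%g = mu k.
Proof.
move=> lt; rewrite /f (bigD1 (Ordinal lt)) //= eqxx mul1r big1 ?addr0 //.
move=> j nj; have -> : (b ^+ k == b ^+ j)%g = false.
  have /= -> := eq_expg_ord (Ordinal lt) j (leqnn m).
  by apply/negbTE; rewrite eq_sym.
by rewrite mul0r.
Qed.

Lemma fout h : h \notin <[b]>%g -> f h = 0.
Proof.
move=> nh; rewrite /f big1 // => k _.
case: eqP => [e|]; last by rewrite mul0r.
by move: nh; rewrite e mem_cycle.
Qed.

Lemma frec h : f h * th h b = lam * f (h * b)%g.
Proof.
have m0 : (0 < m)%N := order_gt0 b.
case hb: (h \in <[b]>%g); last first.
  have nhb : (h * b)%g \notin <[b]>%g.
    apply/negP => hbC; move/negbT: hb => /negP; apply.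
    by rewrite -(mulgK b h) groupM ?groupV ?cycle_id.
  by rewrite fout ?hb // fout // mul0r mulr0.
case/cyclePmin: hb => k lt ->.
rewrite fpow // -expgSr.
have ln := lam_nz.
case: (ltnP k.+1 m) => lt2.
  rewrite fpow // /mu big_ord_recr /= exprSr.
  by field; rewrite ln expf_neq0.
have e : k.+1 = m by apply/eqP; rewrite eqn_leq lt lt2.
rewrite e expg_order -(expg0 b) fpow // /mu big_ord0 expr0 divr1 mulr1.
move: Hlam; rewrite /c -e big_ord_recr /= exprSr => HH.
by rewrite mulrAC -HH; field; rewrite expf_neq0.
Qed.

Lemma twist_root : center_twist G w lam.
Proof.
pose v := \row_(j < #|C|) f (gv j).
apply: (@twist_of_eigen b bG _ rr lam rr_proj rr1 v rr_comm).
  apply/eqP => /rowP /(_ (rk 1%g)); rewrite !mxE gvrk //.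
  have -> : (1 = b ^+ 0)%g by [].
  rewrite fpow ?order_gt0 // /mu big_ord0 expr0 divr1 => /eqP.
  by rewrite oner_eq0.
apply/rowP => j; rewrite !mxE.
have hC : (gv j * b^-1)%g \in C by rewrite groupM ?groupV ?gvC ?bC.
rewrite (bigD1 (rk (gv j * b^-1)%g)) //= big1 ?addr0; last first.
  move=> i ni; rewrite !mxE; case: eqP => [e|]; last by rewrite mulr0.
  by move: ni; rewrite -e mulgK rkgv eqxx.
rewrite !mxE gvrk // mulgKV eqxx frec mulgKV.
by [].
Qed.
End Root.
End Regular.
Section Main.
Hypothesis pG : pgroup 2%N G.
Hypothesis G2 : #|G| != 2%N.
Hypothesis Htw : forall t : algC, center_twist G w t <-> t \in [:: 1; 'i; - 'i].

Lemma one_neq_m1 : (1 : algC) != -1.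
Proof.
apply/eqP => e; have := @ltr01 algC.
by rewrite e oppr_gt0 ltr10.
Qed.

Lemma m1_notS : ~ center_twist G w (-1).
Proof.
move/Htw; rewrite !inE; have n1 := one_neq_m1.
have ni : (-1 : algC) != 'i.
  apply/eqP => e; move: n1; rewrite -sqrCi -e sqrrN expr1n eqxx //.
have nmi : (-1 : algC) != - 'i.
  apply/eqP => e; move: n1; rewrite -sqrCi -sqrrN -e sqrrN expr1n eqxx //.
by rewrite eq_sym (negbTE n1) (negbTE ni) (negbTE nmi).
Qed.

Lemma theta_aa a : a \in G -> (a * a = 1)%g -> dpr_theta w a a a = w a a a.
Proof.
move=> aG aa; rewrite /dpr_theta aa conjg1 conj_id //.
by field; rewrite wn0.
Qed.

Lemma theta_1a a : a \in G -> dpr_theta w a 1%g a = 1.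
Proof.
move=> aG; rewrite /dpr_theta mul1g conjg1 w1m // w1l ?groupJ // w1l //.
by rewrite mulr1 divr1.
Qed.

Lemma stepA b : b \in G -> b != 1%g -> (b * b = 1)%g -> w b b b = -1.
Proof.
move=> bG b1 bb.
have ob : #[b]%g = 2%N.
  have d2 : (#[b]%g %| 2)%N by rewrite order_dvdn expgS expg1 bb.
  have n1 : (#[b]%g != 1)%N by rewrite order_eq1.
  have := dvdn_leq (isT : (0 < 2)%N) d2; have := order_gt0 b.
  by move: n1; case: (#[b]%g) => [|[|[|]]].
have F2 : w b b b * w b b b = 1.
  have := wco b b b b bG bG bG bG; rewrite bb w1m // w1l // w1r // mulr1 mul1r => ->.
  by [].
have : (w b b b - 1) * (w b b b + 1) = 0.
  have -> : (w b b b - 1) * (w b b b + 1) = w b b b * w b b b - 1 by ring.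
  by rewrite F2 subrr.
move/eqP; rewrite mulf_eq0 => /orP [/eqP e|]; last by rewrite addr_eq0 => /eqP.
exfalso; apply: m1_notS; apply: (@twist_root b bG).
rewrite ob !big_ord_recr big_ord0 /= mul1r.
rewrite (_ : (b ^+ 0 = 1)%g) // (_ : (b ^+ 1 = b)%g) ?expg1 // theta_1a // theta_aa //.
by move/eqP: e; rewrite subr_eq0 => /eqP ->; rewrite sqrrN !expr1n mulr1.
Qed.

Lemma stepB b : b \in G -> (b * b = 1)%g.
Proof.
move=> bG; apply/eqP; apply/negPn/negP => nbb.
have [k Gk] := p_natP (pG : (2%N).-nat #|G|).
have dG := order_dvdG bG; rewrite Gk in dG.
move/(dvdn_pfactor _ _ (isT : prime 2%N)): dG => [j _ oj].
have j2 : (2 <= j)%N.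
  have bb2 : (b * b = b ^+ 2)%g by rewrite expgS expg1.
  by case: j oj => [|[|j]] // oj; move: nbb; rewrite bb2 -order_dvdn oj.
pose n := (2 ^ (j - 2))%N.
have on : #[b]%g = (n * 4)%N by rewrite oj /n -[4%N]/(2 ^ 2)%N -expnD subnK.
have nd : (n %| #[b]%g)%N by rewrite on dvdn_mulr.
set b' := (b ^+ n)%g.
have b'G : b' \in G by rewrite groupX.
have ob' : #[b']%g = 4%N.
  by rewrite /b' orderXdiv // on mulKn // expn_gt0.
set c := \prod_(j0 < #[b']%g) dpr_theta w b' (b' ^+ j0)%g b'.
pose r := 4.-root c.
have r4 : r ^+ 4 = c by rewrite rootCK.
have tw u : u ^+ 4 = 1 -> center_twist G w (u * r).
  move=> u4; apply: (@twist_root b' b'G); by rewrite [in LHS]ob' exprMn u4 mul1r r4.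
have i4 : ('i : algC) ^+ 4 = 1 by rewrite (exprM _ 2 2) sqrCi sqrrN expr1n.
have m14 : (-1 : algC) ^+ 4 = 1 by rewrite (exprM _ 2 2) sqrrN !expr1n.
have mi4 : (- 'i : algC) ^+ 4 = 1 by rewrite (exprM _ 2 2) sqrrN sqrCi sqrrN expr1n.
have := tw 1 (expr1n _ _); rewrite mul1r => /Htw; rewrite !inE.
case/or3P => /eqP e; apply: m1_notS.
- by have := tw (-1) m14; rewrite e mulr1.
- by have := tw 'i i4; rewrite e -expr2 sqrCi.
- by have := tw (- 'i) mi4; rewrite e mulrNN -expr2 sqrCi.
Qed.
End Main.
Section Main2.
Hypothesis pG : pgroup 2%N G.
Hypothesis G2 : #|G| != 2%N.
Hypothesis Htw : forall t : algC, center_twist G w t <-> t \in [:: 1; 'i; - 'i].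

Lemma main_lemma X : inv_obj G w X ->
  (inv_iso G (inv_tensor w X X) (inv_unit gT) <-> inv_twist X = 1).
Proof.
have stA := stepA Htw; have stB := stepB pG Htw.
case: X => a chi [/= aZ chin0 chiM].
have [aG ca] := centerP _ _ aZ.
have chi1 : chi 1%g = 1.
  have := chiM 1%g 1%g (group1 _) (group1 _).
  rewrite theta_1r ?group1 // mulg1 mul1r => e.
  by apply: (mulfI (chin0 _ (group1 _))); rewrite e mulr1.
have chisq x : x \in G -> chi x * chi x = dpr_theta w a x x.
  by move=> xG; rewrite chiM // stB // chi1 mulr1.
have twS : chi a \in [:: 1; 'i; - 'i].
  apply/Htw; exists a, 0%N, (fun x => (chi x)%:M); split=> //.
  - split=> [x|x y] /subcent1P [xG _].
      have : (chi x)%:M *m (chi x)^-1%:M = 1%:M :> 'M[algC]_1.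
        by rewrite -scalar_mxM divff ?chin0.
      by case/mulmx1_unit.
    by case/subcent1P=> yG _; rewrite -scalar_mxM chiM // scale_scalar_mx.
  - move=> U _; case: eqP => //= /eqP nU.
    by rewrite /row_full eqn_leq rank_leq_col lt0n mxrank_eq0.
rewrite /inv_iso /inv_tensor /inv_unit /inv_twist /=.
split.
- case=> aa H; case: (eqVneq a 1%g) => [e|a1]; first by rewrite e chi1.
  exfalso.
  have Fa := stA a aG a1 aa.
  have : ~~ (G \subset [set 1%g; a]).
    apply/negP => sG; move/negP: G2; apply; rewrite eqn_leq.
    have := subset_leq_card sG; rewrite cards2 eq_sym a1 => -> /=.
    have s2 : [set 1%g; a] \subset G by apply/subsetP => y; rewrite !inE => /orP [] /eqP ->.
    by have := subset_leq_card s2; rewrite cards2 eq_sym a1.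
  case/subsetPn => x xG; rewrite !inE negb_or => /andP [x1 xa].
  have xx := stB x xG.
  have cax := ca x xG.
  have Fx := stA x xG x1 xx.
  have axG : (a * x)%g \in G by rewrite groupM.
  have ax1 : (a * x)%g != 1%g.
    apply: contraNneq xa => e.
    by rewrite -[x]mul1g -aa -mulgA e mulg1.
  have Fax := stA _ axG ax1 (stB _ axG).
  have E := E_identity aG xG cax aa xx.
  have Hx := H x xG; rewrite -mulrA chisq // in Hx.
  rewrite Hx Fa Fx Fax mul1r mulrNN mulr1 in E.
  by move: one_neq_m1; rewrite {1}E eqxx.
- move=> ca1.
  have aa := stB a aG.
  have Fa : w a a a = 1 by rewrite -theta_aa // -chisq // ca1 mulr1.
  case: (eqVneq a 1%g) => [e|a1]; last first.
    by move: one_neq_m1; rewrite -{1}Fa stA // eqxx.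
  subst a; split; first by rewrite mulg1.
  move=> x xG; rewrite -mulrA chisq //.
  rewrite /dpr_gamma /dpr_theta !conj1g ?w1l ?w1m ?w1r ?group1 //.
  by rewrite invr1 !mulr1.
Qed.
End Main2.
End Cocycle.

Theorem lemma5p13 (gT : finGroupType) (G : {group gT})
    (w : gT -> gT -> gT -> algC) :
  (pgroup 2 G) -> #|G| != 2%N -> normalized_3cocycle G w ->
  (forall t : algC, center_twist G w t <-> t \in [:: 1; 'i; - 'i]) ->
  forall X : gT * (gT -> algC), inv_obj G w X ->
    (inv_iso G (inv_tensor w X X) (inv_unit gT) <-> inv_twist X = 1).
Proof.
move=> pG G2 Hw Htw X HX.
exact: (@main_lemma gT G w Hw pG G2 Htw X HX).
Qed.
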